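(* Let $\Gamma$ be a single-player extensive-form game with no chance nodes and no absentmindedness. Then $\mathrm{VoR}^{\mathrm{opt}}(\Gamma)=1$. Further, both $\Gamma$ and $\mathrm{pr}_1(\Gamma)$ admit a pure optimal strategy.
   Context: A single-player extensive-form game consists of a finite rooted tree (nodes $\mathcal H$, leaves $\mathcal Z$, actions $A_h$), nonterminal nodes belonging to Player 1 or to chance, utility $u_1:\mathcal Z\to\mathbb R_{\ge0}$, and a partition of Player 1's nodes into infosets with common action sets $A_I$. For a node $h$, $\mathrm{obs}(h)=(i_k,I_k,a_k)_k$ lists the player, infoset and action taken along the root-to-$h$ path (excluding $h$); $\mathrm{obs}_1(h)$ is its restriction to Player 1. The game has absentmindedness if some infoset appears more than once among the $I_k$ of $\mathrm{obs}(h)$ for some $h$. $\mathrm{pr}_1(\Gamma)$ has the same tree and utilities, with each infoset partitioned into classes of $h\sim h'\iff\mathrm{obs}_1(h)=\mathrm{obs}_1(h')$. A behavioral strategy $\pi$ assigns $\pi(\cdot\mid I)\in\Delta(A_I)$ to each infoset; it is pure if each is a point mass. $U_1(\pi)$ is the expected utility; an optimal strategy maximizes $U_1$, with value $u_1(\mathrm{opt}(\cdot))$. $\mathrm{VoR}^{\mathrm{opt}}(\Gamma)=u_1(\mathrm{opt}(\mathrm{pr}_1(\Gamma)))/u_1(\mathrm{opt}(\Gamma))$. *)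

(* Defs.v *)
From HB Require Import structures.
From mathcomp Require Import all_boot all_order all_algebra.
From mathcomp Require Import classical_sets reals.
Set Implicit Arguments. Unset Strict Implicit. Unset Printing Implicit Defensive.
Import Order.TTheory GRing.Theory Num.Theory.
Local Open Scope ring_scope.

(* Player-1 nodes carrying the same label I : Info.                        *)
(* Nodes h are identified with their root-to-h action paths.               *)

Section Games.
Variables (R : realType) (Act : finType).

Inductive gtree (Info : Type) : Type :=
| Leaf of R
| Chance of {set Act} & (Act -> R) & (Act -> gtree Info)
| Decision of Info & (Act -> gtree Info).

Record game (Info : Type) := Game {
  root : gtree Info;
  acts : Info -> {set Act} }.

Variable Info : eqType.
Implicit Types (G : game Info) (t : gtree Info) (p : seq Act).

Fixpoint subtree (A : Info -> {set Act}) t p : option (gtree Info) :=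
  match p with
  | [::] => Some t
  | a :: p' =>
    match t with
    | Leaf _ => None
    | Chance Sa _ f => if a \in Sa then subtree A (f a) p' else None
    | Decision J f => if a \in A J then subtree A (f a) p' else None
    end
  end.

Definition node G p := subtree (acts G) (root G) p.

(* The player/infoset pair is encoded as an option:
   None = chance (no infoset), Some I = Player 1 at infoset I. *)
Fixpoint obs_tree t p : seq (option Info * Act) :=
  match p with
  | [::] => [::]
  | a :: p' =>
    match t with
    | Leaf _ => [::]
    | Chance _ _ f => (None, a) :: obs_tree (f a) p'
    | Decision J f => (Some J, a) :: obs_tree (f a) p'
    end
  end.

Definition obs G p := obs_tree (root G) p.

Definition obs1 G p : seq (Info * Act) :=
  pmap (fun e : option Info * Act =>
          if e.1 is Some J then Some (J, e.2) else None) (obs G p).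

Definition absentminded G : Prop :=
  exists p, node G p <> None /\ ~~ uniq [seq e.1 | e <- obs1 G p].

Definition is_chance_node t : bool :=
  if t is Chance _ _ _ then true else false.

Definition no_chance G : Prop :=
  forall p t, node G p = Some t -> ~~ is_chance_node t.

Definition wf_game G : Prop :=
  (forall J, acts G J != finset.set0) /\
  forall p t, node G p = Some t ->
    match t with
    | Leaf u => is_true (0 <= u)
    | Chance Sa q _ => [/\ Sa != finset.set0, (forall a, a \in Sa -> 0 <= q a)
                         & \sum_(a in Sa) q a = 1]
    | Decision _ _ => True
    end.

Definition is_strategy G (pi : Info -> Act -> R) : Prop :=
  forall J, [/\ forall a, 0 <= pi J a,
                forall a, a \notin acts G J -> pi J a = 0
              & \sum_(a in acts G J) pi J a = 1].

Definition is_pure G (pi : Info -> Act -> R) : Prop :=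
  forall J, exists2 a, a \in acts G J & forall b, pi J b = (b == a)%:R.

Fixpoint EU_tree (A : Info -> {set Act}) (pi : Info -> Act -> R) t : R :=
  match t with
  | Leaf u => u
  | Chance Sa q f => \sum_(a in Sa) q a * EU_tree A pi (f a)
  | Decision J f => \sum_(a in A J) pi J a * EU_tree A pi (f a)
  end.

Definition U1 G pi := EU_tree (acts G) pi (root G).

Definition optimal G pi : Prop :=
  is_strategy G pi /\ forall pi', is_strategy G pi' -> U1 G pi' <= U1 G pi.

Definition optval G : R :=
  sup [set x | exists pi, is_strategy G pi /\ x = U1 G pi]%classic.

(* pr_1(G): same tree and utilities; each Player-1 node h of infoset I is
   relabelled (I, obs_1(h)), so that each infoset I is partitioned into the
   classes h ~ h' <-> obs_1(h) = obs_1(h'). *)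
Fixpoint pr1_tree G p t : gtree (Info * seq (Info * Act)) :=
  match t with
  | Leaf u => Leaf _ u
  | Chance Sa q f => Chance Sa q (fun a => pr1_tree G (rcons p a) (f a))
  | Decision J f => Decision (J, obs1 G p) (fun a => pr1_tree G (rcons p a) (f a))
  end.

Definition pr1 G : game (Info * seq (Info * Act)) :=
  Game (pr1_tree G [::] (root G)) (fun J => acts G J.1).

End Games.

Definition VoR (R : realType) (Act : finType) (Info : eqType)
  (G : game R Act Info) : R := optval (pr1 G) / optval G.

(* Main.v *)
Require Import Defs.
From HB Require Import structures.
From mathcomp Require Import all_boot all_order all_algebra.
From mathcomp Require Import classical_sets reals boolp.
Import Order.TTheory GRing.Theory Num.Theory.
Local Open Scope ring_scope.
Set Implicit Arguments. Unset Strict Implicit.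

Section S.
Variables (R : realType) (Act : finType) (Info : eqType).
Variable A : Info -> {set Act}.
Hypothesis hA : forall J, A J != finset.set0.

Fixpoint best (t : gtree R Act Info) : R :=
  match t with
  | Leaf u => u
  | Chance _ _ _ => 0
  | Decision J f => \big[Order.max/0]_(a in A J) best (f a)
  end.

Fixpoint good (t : gtree R Act Info) : Prop :=
  match t with
  | Leaf u => 0 <= u
  | Chance _ _ _ => False
  | Decision J f => forall a, a \in A J -> good (f a)
  end.

Definition obs1t (t : gtree R Act Info) p : seq (Info * Act) :=
  pmap (fun e : option Info * Act =>
          if e.1 is Some J then Some (J, e.2) else None) (obs_tree t p).

Definition occurs J t := exists p, subtree A t p <> None /\ J \in [seq e.1 | e <- obs1t t p].
Definition H2 t := forall p, subtree A t p <> None -> uniq [seq e.1 | e <- obs1t t p].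

Definition strat (pi : Info -> Act -> R) := forall J, [/\ forall a, 0 <= pi J a,
                forall a, a \notin A J -> pi J a = 0
              & \sum_(a in A J) pi J a = 1].
Definition pure (pi : Info -> Act -> R) :=
  forall J, exists2 a, a \in A J & forall b, pi J b = (b == a)%:R.

Lemma pure_strat pi : pure pi -> strat pi.
Proof.
move=> hp J; have [a aA ha] := hp J; split.
- by move=> b; rewrite ha ler0n.
- by move=> b bA; rewrite ha; case: eqP => // eba; rewrite eba aA in bA.
- rewrite (bigD1 a) //= ha eqxx big1 ?addr0 // => b /andP[_ /negbTE nb].
  by rewrite ha nb.
Qed.

Lemma bound t pi : good t -> strat pi -> EU_tree A pi t <= best t.
Proof.
move=> + hpi; elim: t => [u|S q f IH|J f IH] //= gt.
have [p0 _ p1] := hpi J.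
apply: (@le_trans _ _ (\sum_(a in A J) pi J a * \big[Order.max/0]_(a in A J) best (f a))).
  apply: ler_sum => a aA; apply: ler_wpM2l => //.
  apply: le_trans (IH a (gt a aA)) _; exact: le_bigmax_cond.
by rewrite -mulr_suml p1 mul1r.
Qed.

Definition def : Info -> Act -> R := fun J b =>
  if [pick x in A J] is Some x then (b == x)%:R else 0.

Lemma def_pure : pure def.
Proof.
move=> J; rewrite /def; case: pickP => [x xA|h].
  by exists x.
by move: (hA J); case/set0Pn => x; rewrite h.
Qed.

Lemma best_ge0 t : good t -> 0 <= best t.
Proof. by case: t => //= J f _; exact: bigmax_ge_id. Qed.

Lemma achieve t : good t -> H2 t -> exists2 sigma, pure sigma &
  forall pi, (forall J, occurs J t -> pi J =1 sigma J) -> EU_tree A pi t = best t.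
Proof.
elim: t => [u|S q f IH|J f IH] //= gt h2.
  by exists def => //; exact: def_pure.
have step : forall a, exists s : Info -> Act -> R, a \in A J -> pure s /\
  (forall pi, (forall I, occurs I (f a) -> pi I =1 s I) -> EU_tree A pi (f a) = best (f a)).
  move=> a; case aA: (a \in A J); last by exists def.
  have h2a : H2 (f a).
    move=> p hp; have := h2 (a :: p); rewrite /= aA => /(_ hp).
    by rewrite /obs1t /= => /andP[].
  have [s sp sa] := IH a (gt a aA) h2a; by exists s.
have [S' hS] := choice step.
have [a0 a0A] : exists a0, a0 \in A J by apply/set0Pn; exact: hA.
case: (@arg_maxP _ _ _ a0 (mem (A J)) (fun a => best (f a)) a0A) => as_ asA0 asmax.
have asA : as_ \in A J := asA0.
have hbest : \big[Order.max/0]_(a in A J) best (f a) = best (f as_).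
  apply/eqP; rewrite eq_le le_bigmax_cond // andbT.
  apply/bigmax_leP; split; first exact: best_ge0 (gt _ asA).
  by move=> a aA; apply: asmax.
have notJ : ~ occurs J (f as_).
  case=> p [hp hJ]; have := h2 (as_ :: p); rewrite /= asA => /(_ hp).
  by rewrite /obs1t /= hJ.
have [pss pa] := hS as_ asA.
exists (fun I => if I == J then (fun b => (b == as_)%:R) else S' as_ I).
  move=> I; case: eqP => [->|_]; first by exists as_.
  exact: pss.
move=> pi hpi.
have hJ : pi J =1 (fun b => (b == as_)%:R).
  have := hpi J; rewrite eqxx; apply; rewrite /occurs; exists [:: as_]; split; first by rewrite /= asA; case: (f as_).
  by rewrite /obs1t /= mem_head.
rewrite hbest (bigD1 as_) //= hJ eqxx mul1r big1 ?addr0.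
  apply: pa => I hI; have := hpi I; case: eqP => [eIJ|_].
    by rewrite eIJ in hI.
  apply; case: hI => p [hp hIp]; exists (as_ :: p); split; first by rewrite /= asA /=.
  by rewrite /obs1t /= in_cons hIp orbT.
by move=> b /andP[_ /negbTE nb]; rewrite hJ nb mul0r.
Qed.

Lemma good_of t : (forall p t', subtree A t p = Some t' -> ~~ is_chance_node t' /\
   (if t' is Leaf u then 0 <= u else True)) -> good t.
Proof.
elim: t => [u|S q f IH|J f IH] /= h.
- by have [] := h [::] _ erefl.
- by have [] := h [::] _ erefl.
- move=> a aA; apply: IH => p t' ht; apply: (h (a :: p)); by rewrite /= aA.
Qed.

Lemma sup_eq (S : set R) (m : R) : S m -> (forall x, S x -> x <= m) -> sup S = m.
Proof.
move=> Sm ub; apply/eqP; rewrite eq_le; apply/andP; split.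
  by apply: ge_sup; [exists m | move=> x /ub].
have hs : has_sup S by split; [exists m | exists m => x /ub].
exact: sup_upper_bound hs _ Sm.
Qed.

End S.

Section T.
Variables (R : realType) (Act : finType) (Info : eqType) (G : game R Act Info).

Lemma pr1_EU pi t p : EU_tree (acts (pr1 G)) (fun JO => pi JO.1) (pr1_tree G p t)
   = EU_tree (acts G) pi t.
Proof.
elim: t p => [u|S q f IH|J f IH] p //=; apply: eq_bigr => a _; by rewrite IH.
Qed.

Lemma pr1_best t p : best (acts (pr1 G)) (pr1_tree G p t) = best (acts G) t.
Proof.
elim: t p => [u|S q f IH|J f IH] p //=; apply: eq_bigr => a _; by rewrite IH.
Qed.

Lemma pr1_good t p : good (acts G) t -> good (acts (pr1 G)) (pr1_tree G p t).
Proof.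
elim: t p => [u|S q f IH|J f IH] p //= h a aA; exact: IH (h a aA).
Qed.
End T.

Unset Implicit Arguments.
Theorem proposition6 (R : realType) (Act : finType) (Info : eqType)
    (G : game R Act Info) :
  wf_game G -> no_chance G -> ~ absentminded G ->
  [/\ 0 < optval G -> VoR G = 1,
      exists2 pi, is_pure G pi & optimal G pi
    & exists2 pi, is_pure (pr1 G) pi & optimal (pr1 G) pi].
Proof.
move=> [hA hwf] hnc hna.
have gd : good (acts G) (Defs.root G).
  apply: good_of => p t' ht; split; first exact: hnc ht.
  by move: (hwf p t' ht); case: t' {ht}.
have h2 : H2 (acts G) (Defs.root G).
  move=> p hp; case E: (uniq _) => //; exfalso; apply: hna; exists p; split => //.
  by rewrite /obs1 /obs E.
have [sigma ps sa] := achieve hA gd h2.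
have Usig : U1 G sigma = best (acts G) (Defs.root G) by apply: sa.
have bG : forall pi, is_strategy G pi -> U1 G pi <= best (acts G) (Defs.root G).
  by move=> pi hpi; apply: bound.
have gd1 : good (acts (pr1 G)) (Defs.root (pr1 G)) by apply: pr1_good.
have bP : forall pi, is_strategy (pr1 G) pi -> U1 (pr1 G) pi <= best (acts G) (Defs.root G).
  move=> pi hpi; rewrite -(pr1_best G _ [::]); exact: bound gd1 hpi.
have UP : U1 (pr1 G) (fun JO => sigma JO.1) = best (acts G) (Defs.root G).
  by rewrite /U1 /= pr1_EU.
have ps1 : is_pure (pr1 G) (fun JO => sigma JO.1) by move=> JO; exact: ps.
have stG : is_strategy G sigma by exact: pure_strat.
have stP : is_strategy (pr1 G) (fun JO => sigma JO.1) by exact: pure_strat.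
have oG : optval G = best (acts G) (Defs.root G).
  apply: sup_eq; first by exists sigma.
  by move=> x [pi [hpi ->]]; apply: bG.
have oP : optval (pr1 G) = best (acts G) (Defs.root G).
  apply: sup_eq; first by exists (fun JO => sigma JO.1).
  by move=> x [pi [hpi ->]]; apply: bP.
split.
- by move=> hpos; rewrite /VoR oP -oG divff // gt_eqF.
- exists sigma => //; split => // pi hpi; rewrite Usig; exact: bG.
- exists (fun JO => sigma JO.1) => //; split => // pi hpi; rewrite UP; exact: bP.
Qed.
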